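(* Consider the prefix code $C_\infty$ for $\mathcal{A}$ in which, for each $s\ge0$, writing $s=2^t-1+r$ with $t\ge0$ and $0\le r\le 2^t-1$, exactly $2^t-1-r$ of the $s+1$ pairs $(i,j)$ with $i+j=s$ receive codewords of length $(t-1)(s+2)+2r+2$ and the remaining $2r+1$ receive codewords of length $(t-1)(s+2)+2r+3$. Then for every $q\in(0,1)$ the expected codeword length of $C_\infty$ under $\mathrm{TDGD}(q)$ is $$\bar L_q(C_\infty)=1+\frac{1}{1-q}\sum_{t\ge0}q^{2^t}\big(2^t(1-q)+2\big).$$
   Context: $\mathcal{A}=\{(i,j):i,j\in\mathbb{Z}_{\ge0}\}$; $\mathrm{TDGD}(q)$ is the distribution $P(i,j)=(1-q)^2q^{i+j}$ on $\mathcal{A}$. *)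

(* Defs.v *)
From Stdlib Require Import Reals Lra Lia ZArith Arith List.
Import ListNotations.
Open Scope R_scope.

(* Codewords are binary strings; a code for A = N x N maps each pair to a word. *)
Definition word := list bool.

Definition is_prefix (u v : word) : Prop := exists w, v = u ++ w.

Definition prefix_code (C : nat * nat -> word) : Prop :=
  forall a b, a <> b -> ~ is_prefix (C a) (C b).

Definition tdgd (q : R) (a : nat * nat) : R := (1 - q) ^ 2 * q ^ (fst a + snd a).

(* s = 2^t - 1 + r with 0 <= r <= 2^t - 1, i.e. t = floor(log2 (s+1)). *)
Definition tt_of (s : nat) : nat := Nat.log2 (s + 1).
Definition rr_of (s : nat) : nat := s + 1 - 2 ^ tt_of s.

(* Short length (t-1)(s+2)+2r+2, computed in Z (t-1 may be -1 when s=0). *)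
Definition short_len (s : nat) : Z :=
  ((Z.of_nat (tt_of s) - 1) * (Z.of_nat s + 2) + 2 * Z.of_nat (rr_of s) + 2)%Z.

Definition n_short (s : nat) : nat := 2 ^ tt_of s - 1 - rr_of s.

(* The length profile of C_infinity: on each diagonal i+j=s exactly
   2^t-1-r pairs get length short_len s, all others get short_len s + 1. *)
Definition cinf_lengths (C : nat * nat -> word) : Prop :=
  forall s : nat,
    length (filter (fun i => Z.eqb (Z.of_nat (length (C (i, s - i)%nat))) (short_len s))
                   (seq 0 (s + 1))) = n_short s
    /\ forall i : nat, (i <= s)%nat ->
         Z.of_nat (length (C (i, s - i)%nat)) = short_len s \/
         Z.of_nat (length (C (i, s - i)%nat)) = (short_len s + 1)%Z.

Definition diag_term (q : R) (C : nat * nat -> word) (s : nat) : R :=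
  fold_right Rplus 0
    (map (fun i => tdgd q (i, s - i)%nat * INR (length (C (i, s - i)%nat))) (seq 0 (s + 1))).

(* Main.v *)
Require Import Defs.
From Stdlib Require Import Reals Lra Lia ZArith Arith List.
Open Scope R_scope.

Lemma tr_spec (s : nat) :
  (2 ^ tt_of s + rr_of s = s + 1 /\ rr_of s < 2 ^ tt_of s)%nat.
Proof.
  unfold rr_of, tt_of.
  destruct (Nat.log2_spec (s+1)) as [H1 H2]; [lia|].
  rewrite Nat.pow_succ_r' in H2. lia.
Qed.

Lemma tr_unique (s t r : nat) :
  (2 ^ t + r = s + 1 -> r < 2 ^ t -> tt_of s = t /\ rr_of s = r)%nat.
Proof.
  intros H1 H2.
  assert (Ht : tt_of s = t).
  { unfold tt_of. apply Nat.log2_unique; [lia|]. rewrite Nat.pow_succ_r'. lia. }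
  split; [exact Ht|]. unfold rr_of. rewrite Ht. lia.
Qed.

Definition Kf (N : nat) : nat :=
  if Nat.eqb (rr_of N) 0 then tt_of N else S (tt_of N).

Lemma Kf_step (N : nat) :
  Kf (S N) = Kf N \/ (Kf (S N) = S (Kf N) /\ 2 ^ Kf N = S N)%nat.
Proof.
  destruct (tr_spec N) as [H1 H2].
  set (t := tt_of N) in *. set (r := rr_of N) in *.
  assert (Hp : (1 <= 2 ^ t)%nat) by (apply Nat.neq_0_lt_0; apply Nat.pow_nonzero; lia).
  unfold Kf. fold t r.
  destruct (Nat.eq_dec (S r) (2 ^ t)) as [E|E].
  - destruct (tr_unique (S N) (S t) 0) as [A B].
    { rewrite Nat.pow_succ_r'. lia. } { apply Nat.neq_0_lt_0; apply Nat.pow_nonzero; lia. }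
    rewrite A, B. simpl.
    destruct (Nat.eqb_spec r 0).
    + right. split; [reflexivity|]. lia.
    + left. reflexivity.
  - destruct (tr_unique (S N) t (S r)) as [A B]; [lia|lia|].
    rewrite A, B. simpl.
    destruct (Nat.eqb_spec r 0).
    + right. split; [reflexivity|]. lia.
    + left. reflexivity.
Qed.

Lemma Kf_bounds (N : nat) :
  (Kf N <= N + 1 /\ 2 ^ Kf N <= 2 * (N + 1) /\ N < 2 ^ Kf N)%nat.
Proof.
  destruct (tr_spec N) as [H1 H2].
  pose proof (Nat.pow_gt_lin_r 2 (tt_of N) ltac:(lia)).
  unfold Kf. destruct (Nat.eqb_spec (rr_of N) 0).
  - lia.
  - rewrite Nat.pow_succ_r'. lia.
Qed.

Lemma Kf_0 : Kf 0 = 0%nat.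
Proof. reflexivity. Qed.

Definition fK (N : nat) : R :=
  INR N + 1 + (INR N + 2) * (INR (Kf N) * (INR N + 1) - 2 ^ Kf N + 1).

Lemma fold_tdgd (q : R) (C : nat * nat -> word) (N : nat) (l : list nat) :
  (forall i, In i l -> (i <= N)%nat) ->
  fold_right Rplus 0 (map (fun i => tdgd q (i, N - i)%nat * INR (length (C (i, N - i)%nat))) l)
  = (1 - q) ^ 2 * q ^ N * fold_right Rplus 0 (map (fun i => INR (length (C (i, N - i)%nat))) l).
Proof.
  induction l as [|a l IH]; intros H; simpl.
  - ring.
  - rewrite IH by (intros; apply H; right; auto).
    unfold tdgd; simpl fst; simpl snd.
    replace (a + (N - a))%nat with N by (specialize (H a (or_introl eq_refl)); lia).
    ring.
Qed.

Lemma sum_lens (g : nat -> nat) (L : Z) (l : list nat) :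
  (forall i, In i l -> Z.of_nat (g i) = L \/ Z.of_nat (g i) = (L + 1)%Z) ->
  fold_right Rplus 0 (map (fun i => INR (g i)) l)
  = INR (length l) * (IZR L + 1) - INR (length (filter (fun i => Z.eqb (Z.of_nat (g i)) L) l)).
Proof.
  induction l as [|a l IH]; intros H; cbn [map fold_right filter length].
  - simpl. ring.
  - rewrite IH by (intros; apply H; right; auto).
    destruct (H a (or_introl eq_refl)) as [E|E].
    + rewrite E, Z.eqb_refl. cbn [length].
      rewrite (INR_IZR_INZ (g a)), E, !S_INR. ring.
    + replace (Z.of_nat (g a) =? L)%Z with false by (symmetry; apply Z.eqb_neq; lia).
      rewrite (INR_IZR_INZ (g a)), E, S_INR, plus_IZR. ring.
Qed.

Lemma diag_eq (q : R) (C : nat * nat -> word) :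
  cinf_lengths C -> forall N, diag_term q C N = (1 - q) ^ 2 * q ^ N * fK N.
Proof.
  intros HC N. unfold diag_term.
  rewrite fold_tdgd by (intros i Hi; apply in_seq in Hi; lia).
  destruct (HC N) as [Hcnt Hall].
  rewrite (sum_lens (fun i => length (C (i, N - i)%nat)) (short_len N)).
  2:{ intros i Hi. apply in_seq in Hi. apply Hall. lia. }
  rewrite Hcnt, length_seq.
  f_equal.
  destruct (tr_spec N) as [H1 H2].
  assert (Hn : (n_short N + rr_of N + 1 = 2 ^ tt_of N)%nat) by (unfold n_short; lia).
  assert (Hn' : INR (n_short N) = INR (2 ^ tt_of N) - INR (rr_of N) - 1).
  { rewrite <- Hn, !plus_INR. simpl. ring. }
  assert (HL : IZR (short_len N) = (INR (tt_of N) - 1) * (INR N + 2) + 2 * INR (rr_of N) + 2).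
  { unfold short_len. rewrite !plus_IZR, !mult_IZR, minus_IZR, plus_IZR, <- !INR_IZR_INZ. reflexivity. }
  assert (HN : INR N + 1 = INR (2 ^ tt_of N) + INR (rr_of N)).
  { rewrite <- plus_INR, H1, plus_INR. simpl. ring. }
  rewrite Hn', HL. unfold fK, Kf.
  rewrite pow_INR in HN. replace (INR 2) with 2 in HN by (simpl; ring).
  replace (INR (N + 1)) with (INR N + 1) by (rewrite plus_INR; simpl; ring).
  rewrite pow_INR. replace (INR 2) with 2 by (simpl; ring).
  destruct (Nat.eqb_spec (rr_of N) 0) as [E|E].
  - rewrite E in HN |- *. simpl INR in *.
    replace (INR N) with (2 ^ tt_of N - 1) by lra. ring.
  - rewrite S_INR. simpl pow.
    replace (INR N) with (2 ^ tt_of N + INR (rr_of N) - 1) by lra. ring.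
Qed.

Definition vt (q : R) (t : nat) : R := q ^ (2 ^ t) * (INR (2 ^ t) * (1 - q) + 2).

Fixpoint V (q : R) (K : nat) : R :=
  match K with 0%nat => 0 | S k => V q k + vt q k end.

Lemma V_sum (q : R) (n : nat) : sum_f_R0 (vt q) n = V q (S n).
Proof. induction n; simpl. - ring. - rewrite IHn. simpl. ring. Qed.

Definition Bnd (q : R) (N : nat) : R :=
  2 * INR (Kf N) / (1 - q) + (2 + 2 * INR (Kf N) * (INR N + 1) - 2 ^ Kf N) + (1 - q) * fK N.

Definition G (q : R) (N : nat) : R :=
  1 + V q (Kf N) / (1 - q) - q ^ (N + 1) * Bnd q N.

Lemma partial_eq (q : R) (C : nat * nat -> word) :
  q <> 1 -> cinf_lengths C -> forall N, sum_f_R0 (diag_term q C) N = G q N.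
Proof.
  intros Hq HC. assert (Hq' : 1 - q <> 0) by lra.
  induction N.
  - simpl. rewrite diag_eq by auto. unfold G, Bnd, fK. rewrite Kf_0. simpl. field; auto.
  - simpl sum_f_R0. rewrite IHN, diag_eq by auto.
    unfold G, Bnd, fK.
    replace (S N + 1)%nat with (S (N + 1)) by lia.
    rewrite !S_INR. simpl pow.
    replace (q ^ (N + 1)) with (q * q ^ N) by (rewrite Nat.add_comm; reflexivity).
    destruct (Kf_step N) as [E|[E1 E2]].
    + rewrite E. field; auto.
    + rewrite E1. simpl V. unfold vt. rewrite E2.
      replace (S N) with (N + 1)%nat by lia.
      rewrite S_INR.
      assert (HM : 2 ^ Kf N = INR N + 1).
      { replace 2 with (INR 2) by (simpl; ring). rewrite <- pow_INR, E2. rewrite S_INR. ring. }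
      rewrite HM, plus_INR. simpl INR. replace (2 ^ S (Kf N)) with (2 * 2 ^ Kf N) by reflexivity. rewrite HM.
      replace (q ^ (N + 1)) with (q * q ^ N) by (rewrite Nat.add_comm; reflexivity). field; auto.
Qed.

Lemma pow_le1 (r : R) (n : nat) : 0 <= r <= 1 -> r ^ n <= 1.
Proof.
  intros H. induction n; simpl. lra.
  assert (0 <= r ^ n) by (apply pow_le; lra). nra.
Qed.

Lemma pow_anti (r : R) (t m : nat) : 0 <= r <= 1 -> (t <= m)%nat -> r ^ m <= r ^ t.
Proof.
  intros H Htm. replace m with (t + (m - t))%nat by lia.
  rewrite pow_add. assert (0 <= r ^ t) by (apply pow_le; lra).
  pose proof (pow_le1 r (m - t) H). nra.
Qed.

Lemma sqrt_ex (q : R) : 0 < q < 1 -> exists r, 0 < r < 1 /\ r ^ 2 = q.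
Proof.
  intros H. exists (sqrt q). split; [split|].
  - apply sqrt_lt_R0; lra.
  - rewrite <- sqrt_1. apply sqrt_lt_1; lra.
  - simpl. rewrite Rmult_1_r. apply sqrt_sqrt; lra.
Qed.

Lemma bernoulli (h : R) (n : nat) : 0 <= h -> 1 + INR n * h <= (1 + h) ^ n.
Proof.
  intros H. induction n. simpl. lra.
  rewrite S_INR. cbn [pow]. assert (0 <= INR n) by apply pos_INR. nra.
Qed.

Lemma lin_bound (r : R) (n : nat) : 0 < r < 1 -> INR n * r ^ n <= r / (1 - r).
Proof.
  intros H. set (h := (1 - r) / r).
  assert (Hh : 0 < h) by (unfold h; apply Rdiv_lt_0_compat; lra).
  pose proof (bernoulli h n ltac:(lra)).
  assert (E : r * (1 + h) = 1) by (unfold h; field; lra).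
  assert (E2 : r ^ n * (1 + h) ^ n = 1) by (rewrite <- Rpow_mult_distr, E; apply pow1).
  assert (0 < r ^ n) by (apply pow_lt; lra).
  assert (INR n * h * r ^ n <= 1) by nra.
  replace (r / (1 - r)) with (/ h) by (unfold h; field; lra).
  apply (Rmult_le_reg_l h); [lra|]. rewrite Rinv_r by lra. nra.
Qed.

Lemma geo_squeeze (y : nat -> R) (D r : R) :
  0 < r < 1 -> (forall N, Rabs (y N) <= D * r ^ N) -> Un_cv y 0.
Proof.
  intros Hr Hy eps Heps.
  assert (HD : 0 <= D).
  { specialize (Hy 0%nat). simpl in Hy. pose proof (Rabs_pos (y 0%nat)). lra. }
  destruct (pow_lt_1_zero r ltac:(rewrite Rabs_pos_eq; lra) (eps / (D + 1))) as [N0 HN0].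
  { apply Rdiv_lt_0_compat; lra. }
  exists N0. intros n Hn. unfold Rdist. rewrite Rminus_0_r.
  specialize (HN0 n Hn). specialize (Hy n).
  rewrite Rabs_pos_eq in HN0 by (apply pow_le; lra).
  assert (D * r ^ n <= (D + 1) * r ^ n) by (assert (0 <= r ^ n) by (apply pow_le; lra); nra).
  assert ((D + 1) * r ^ n < eps).
  { apply (Rmult_lt_compat_l (D + 1)) in HN0; [|lra].
    replace ((D + 1) * (eps / (D + 1))) with eps in HN0 by (field; lra). lra. }
  lra.
Qed.

Lemma cubic_bound (q : R) : 0 < q < 1 ->
  exists D r, 0 < r < 1 /\ forall N, (INR N + 2) ^ 3 * q ^ (N + 1) <= D * r ^ N.
Proof.
  intros Hq.
  destruct (sqrt_ex q Hq) as [s [Hs Es]].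
  destruct (sqrt_ex s Hs) as [r [Hr Er]].
  set (c := r / (1 - r)).
  exists (c ^ 3 / q * r ^ 2), r. split; [exact Hr|]. intros N.
  pose proof (lin_bound r (N + 2) Hr) as HL. fold c in HL.
  rewrite plus_INR in HL. simpl (INR 2) in HL.
  replace (1 + 1) with 2 in HL by ring.
  assert (Hq4 : q = r ^ 4) by (rewrite <- Es, <- Er; ring).
  assert (0 <= (INR N + 2) * r ^ (N + 2)) by (assert (0 <= INR N) by apply pos_INR; assert (0 < r ^ (N+2)) by (apply pow_lt; lra); nra).
  assert (Hc3 : ((INR N + 2) * r ^ (N + 2)) ^ 3 <= c ^ 3).
  { apply pow_incr. lra. }
  set (x := r ^ (N + 2)) in *.
  assert (Ex : q ^ (N + 1) * q = x ^ 4).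
  { unfold x. replace (q ^ (N+1) * q) with (q ^ (N + 2)).
    - rewrite Hq4, <- !pow_mult, Nat.mul_comm. reflexivity.
    - replace (N + 2)%nat with (S (N + 1)) by lia. simpl. ring. }
  assert (Exr : x = r ^ N * r ^ 2) by (unfold x; apply pow_add).
  assert (E : (INR N + 2) ^ 3 * q ^ (N + 1) = ((INR N + 2) * x) ^ 3 * x / q).
  { apply (Rmult_eq_reg_r q); [|lra]. unfold Rdiv. rewrite Rmult_assoc, Ex.
    field. lra. }
  rewrite E. assert (0 < x) by (unfold x; apply pow_lt; lra).
  assert (0 < r ^ N) by (apply pow_lt; lra).
  assert (Hc : 0 <= c ^ 3) by (apply pow_le; unfold c; apply Rlt_le, Rdiv_lt_0_compat; lra).
  rewrite Exr in *.
  unfold Rdiv. assert (0 < / q) by (apply Rinv_0_lt_compat; lra).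
  assert (0 < r ^ 2) by (apply pow_lt; lra).
  apply Rle_trans with (c ^ 3 * (r ^ N * r ^ 2) * / q).
  - apply Rmult_le_compat_r; [lra|]. apply Rmult_le_compat_r; [nra|]. exact Hc3.
  - right. ring.
Qed.

Lemma bnd_alg (k M n w : R) :
  0 <= n -> 0 <= k <= n + 1 -> 0 <= M <= 2 * (n + 1) -> 0 < w < 1 ->
  Rabs (2 * k / w + (2 + 2 * k * (n + 1) - M) + w * (n + 1 + (n + 2) * (k * (n + 1) - M + 1)))
  <= 20 / w * (n + 2) ^ 3.
Proof.
  intros Hn Hk HM Hw.
  set (a := / w).
  assert (Ha : 1 <= a).
  { unfold a. rewrite <- Rinv_1. apply Rinv_le_contravar; lra. }
  assert (Haw : a * w = 1) by (unfold a; field; lra).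
  unfold Rdiv. fold a.
  set (x := n + 2).
  assert (Hx : 2 <= x) by (unfold x; lra).
  assert (HA : 0 <= k * (n + 1) <= x * x) by (unfold x; split; nra).
  set (A := k * (n + 1)) in *.
  assert (Hx3 : x * x <= x ^ 3 / 2) by (simpl; nra).
  assert (Hx2 : x <= x ^ 3 / 4) by (simpl; nra).
  assert (Hx1 : 1 <= x ^ 3 / 8) by (simpl; nra).
  assert (HwA : 0 <= w * (n + 2) * A) by (apply Rmult_le_pos; [nra|lra]).
  assert (HwM : 0 <= w * (n + 2) * M) by (apply Rmult_le_pos; [nra|lra]).
  assert (Hup : 2 * k * a + (2 + 2 * A - M) + w * (n + 1 + (n + 2) * (A - M + 1))
               <= 2 * x * a + 2 + 2 * x * x + x + x * x * x + x).
  { assert (2 * k * a <= 2 * x * a) by (unfold x; nra).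
    assert (w * (n+1) <= x) by (unfold x; nra).
    assert (w * (n+2) <= x) by (unfold x; nra).
    assert (w * (n + 2) * A <= x * x * x).
    { replace (x * x * x) with (x * (x * x)) by ring.
      apply Rmult_le_compat; nra. }
    nra. }
  assert (Hlo : - (2 * x + x * 2 * x)
               <= 2 * k * a + (2 + 2 * A - M) + w * (n + 1 + (n + 2) * (A - M + 1))).
  { assert (0 <= 2 * k * a) by nra.
    assert (w * (n+2) <= x) by (unfold x; nra).
    assert (w * (n + 2) * M <= x * 2 * x).
    { replace (x * 2 * x) with (x * (2 * x)) by ring.
      apply Rmult_le_compat; unfold x in *; nra. }
    assert (0 <= w * (n + 1)) by nra. assert (0 <= w * (n+2)) by nra.
    assert (E : 2 * k * a + (2 + 2 * A - M) + w * (n + 1 + (n + 2) * (A - M + 1))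
      = 2*k*a + 2 + 2*A - M + w*(n+1) + w*(n+2)*A - w*(n+2)*M + w*(n+2)) by ring.
    rewrite E. unfold x in *. lra. }
  apply Rabs_le. 
  assert (x * x * x = x ^ 3) by (simpl; ring).
  assert (0 <= x ^ 3) by (apply pow_le; lra).
  set (X3 := x ^ 3) in *.
  assert (HaX : X3 <= a * X3) by nra.
  assert (HaX2 : a * x <= a * (X3 / 4)) by nra.
  assert (0 <= a * X3) by nra.
  replace (20 * a * (n + 2) ^ 3) with (20 * (a * X3)) by (unfold X3, x; ring).
  assert (E2: 2*k*(n+1) = 2*A) by (unfold A; ring). rewrite E2.
  unfold X3 in *. unfold x in *.
  split.
  - lra.
  - lra.
Qed.

Lemma vt_bound (q : R) : 0 < q < 1 ->
  exists D s, 0 < s < 1 /\ forall t, 0 <= vt q t <= D * s ^ t.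
Proof.
  intros Hq. destruct (sqrt_ex q Hq) as [s [Hs Es]].
  set (c := s / (1 - s)).
  exists (c + 2), s. split; [exact Hs|]. intros t.
  unfold vt. set (m := (2 ^ t)%nat).
  assert (Htm : (t <= m)%nat) by (pose proof (Nat.pow_gt_lin_r 2 t ltac:(lia)); unfold m; lia).
  assert (Hqm : q ^ m = s ^ m * s ^ m) by (rewrite <- Es, <- pow_mult, <- pow_add; f_equal; lia).
  pose proof (lin_bound s m Hs) as HL. fold c in HL.
  assert (0 < s ^ m) by (apply pow_lt; lra).
  assert (0 <= INR m) by apply pos_INR.
  assert (s ^ m <= 1) by (apply pow_le1; lra).
  assert (Hsm : s ^ m <= s ^ t) by (apply pow_anti; lra || lia).
  assert (0 <= c) by (unfold c; apply Rlt_le, Rdiv_lt_0_compat; lra).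
  rewrite Hqm. split.
  - assert (0 <= INR m * (1 - q) + 2) by nra. nra.
  - assert (INR m * s ^ m * s ^ m <= c * s ^ m) by nra.
    assert (s ^ m * s ^ m <= s ^ m) by nra.
    assert (0 <= INR m * s ^ m * s ^ m) by (apply Rmult_le_pos; [apply Rmult_le_pos|]; lra).
    assert (INR m * s ^ m * s ^ m * (1 - q) <= INR m * s ^ m * s ^ m) by nra.
    assert (E : s ^ m * s ^ m * (INR m * (1 - q) + 2) = INR m * s ^ m * s ^ m * (1 - q) + 2 * (s ^ m * s ^ m)) by ring.
    assert (s ^ m * s ^ m * (INR m * (1 - q) + 2) <= c * s ^ m + 2 * s ^ m) by (rewrite E; lra).
    nra.
Qed.

Lemma geo_cv (D s : R) : 0 < s < 1 ->
  Un_cv (fun N => sum_f_R0 (fun n => D * s ^ n) N) (D * / (1 - s)).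
Proof.
  intros Hs.
  assert (H := GP_infinite s ltac:(rewrite Rabs_pos_eq; lra)).
  assert (Hc : Un_cv (fun _ : nat => D) D).
  { intros eps He. exists 0%nat. intros. rewrite Rdist_eq. lra. }
  pose proof (CV_mult _ _ _ _ Hc H) as HM.
  intros eps He. destruct (HM eps He) as [N0 HN0]. exists N0. intros n Hn.
  specialize (HN0 n Hn).
  replace (sum_f_R0 (fun n0 : nat => D * s ^ n0) n) with (D * sum_f_R0 (fun n0 => 1 * s ^ n0) n).
  - exact HN0.
  - clear. induction n; simpl. ring. rewrite <- IHn. ring.
Qed.

Lemma S_exists (q : R) : 0 < q < 1 -> exists S, Un_cv (sum_f_R0 (vt q)) S.
Proof.
  intros Hq. destruct (vt_bound q Hq) as [D [s [Hs Hb]]].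
  destruct (Rseries_CV_comp (vt q) (fun n => D * s ^ n) Hb) as [l Hl].
  - exists (D * / (1 - s)). apply geo_cv. exact Hs.
  - exists l. exact Hl.
Qed.

Lemma boundary_cv (q : R) : 0 < q < 1 -> Un_cv (fun N => q ^ (N + 1) * Bnd q N) 0.
Proof.
  intros Hq. destruct (cubic_bound q Hq) as [D [r [Hr Hb]]].
  apply (geo_squeeze _ (20 / (1 - q) * D) r Hr).
  intros N. unfold Bnd.
  destruct (Kf_bounds N) as [H1 [H2 H3]].
  assert (Hk : 0 <= INR (Kf N) <= INR N + 1).
  { split; [apply pos_INR|]. replace (INR N + 1) with (INR (N + 1)) by (rewrite plus_INR; simpl; ring). apply le_INR; lia. }
  assert (HM : 0 <= 2 ^ Kf N <= 2 * (INR N + 1)).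
  { split; [apply pow_le; lra|]. replace 2 with (INR 2) at 1 by (simpl; ring). rewrite <- pow_INR.
    replace (2 * (INR N + 1)) with (INR (2 * (N + 1))) by (rewrite mult_INR, plus_INR; simpl; ring). apply le_INR; lia. }
  pose proof (bnd_alg (INR (Kf N)) (2 ^ Kf N) (INR N) (1 - q) (pos_INR N) Hk HM ltac:(lra)) as HB.
  unfold fK. rewrite Rabs_mult, Rabs_pos_eq by (apply pow_le; lra).
  assert (0 <= q ^ (N + 1)) by (apply pow_le; lra).
  specialize (Hb N).
  assert (0 < 20 / (1 - q)) by (apply Rdiv_lt_0_compat; lra).
  apply Rle_trans with (q ^ (N + 1) * (20 / (1 - q) * (INR N + 2) ^ 3)).
  - apply Rmult_le_compat_l; assumption.
  - replace (q ^ (N + 1) * (20 / (1 - q) * (INR N + 2) ^ 3)) with (20 / (1 - q) * ((INR N + 2) ^ 3 * q ^ (N + 1))) by ring.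
    rewrite Rmult_assoc. apply Rmult_le_compat_l; lra.
Qed.

Theorem corollary5 :
  forall (C : nat * nat -> word), prefix_code C -> cinf_lengths C ->
  forall q : R, 0 < q < 1 ->
  exists S : R,
    infinite_sum (fun t : nat => q ^ (2 ^ t) * (INR (2 ^ t) * (1 - q) + 2)) S /\
    infinite_sum (diag_term q C) (1 + S / (1 - q)).
Proof.
  intros C _ HC q Hq.
  destruct (S_exists q Hq) as [Sv HS].
  exists Sv. split; [exact HS|].
  pose proof (boundary_cv q Hq) as HB.
  intros eps Heps.
  destruct (HS (eps * (1 - q) / 2)) as [N1 HN1].
  { apply Rdiv_lt_0_compat; [nra|lra]. }
  destruct (HB (eps / 2)) as [N2 HN2]; [lra|].
  exists (max (2 ^ S N1) N2). intros n Hn.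
  rewrite partial_eq by (lra || exact HC).
  unfold G.
  destruct (Kf_bounds n) as [_ [_ Hlt]].
  assert (Hk : (S N1 < Kf n)%nat).
  { apply (Nat.pow_lt_mono_r_iff 2); [lia|]. lia. }
  destruct (Kf n) as [|k] eqn:EK; [lia|].
  rewrite <- V_sum.
  specialize (HN1 k ltac:(lia)). specialize (HN2 n ltac:(lia)).
  unfold Rdist in *.
  rewrite Rminus_0_r in HN2.
  assert (Hw : 0 < 1 - q) by lra.
  assert (E : 1 + sum_f_R0 (vt q) k / (1 - q) - q ^ (n + 1) * Bnd q n - (1 + Sv / (1 - q))
              = (sum_f_R0 (vt q) k - Sv) / (1 - q) - q ^ (n + 1) * Bnd q n) by (field; lra).
  rewrite E.
  eapply Rle_lt_trans; [apply Rabs_triang|].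
  rewrite Rabs_Ropp. unfold Rdiv. rewrite Rabs_mult, (Rabs_pos_eq (/ (1 - q))) by (apply Rlt_le, Rinv_0_lt_compat; lra).
  assert (Rabs (sum_f_R0 (vt q) k - Sv) * / (1 - q) < eps / 2).
  { apply (Rmult_lt_reg_r (1 - q)); [lra|]. rewrite Rmult_assoc, Rinv_l by lra.
    replace (eps / 2 * (1 - q)) with (eps * (1 - q) / 2) by field. lra. }
  lra.
Qed.
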